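(* Let $(A_i)_{i\in I}$ be any family of finite partially ordered sets, each having a least element $0_i$ and a greatest element $1_i$, and let $A=\prod_{i\in I}A_i$ with the componentwise partial order $\preccurlyeq$. Let $W$ be the set of all up-sets $x$ of $A$ such that, for some natural number $n$ and distinct indices $i_0,\dots,i_{n-1}\in I$, $x$ is the inverse image, under the projection of $A$ onto $A_{i_0}\times\dots\times A_{i_{n-1}}$, of an up-set of that (componentwise ordered) finite product. Then $(A,W)$ is a Pratt comonoid.
   Context: An up-set of a poset $P$ is a subset $x$ with $a\in x$, $a\preccurlyeq b$ implying $b\in x$. A Pratt comonoid is a pair $(A,W)$ where $A$ is a set and $W$ is a set of subsets of $A$ such that (i) $\emptyset\in W$ and $A\in W$; (ii) whenever $C\subseteq A\times A$ is such that for every $a\in A$ both the $a$-th row $\{b\mid (a,b)\in C\}$ and the $a$-th column $\{b\mid (b,a)\in C\}$ belong to $W$ (a crossword over $W$), the diagonal $\{b\mid (b,b)\in C\}$ also belongs to $W$. *)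

(* Defs.v *)
From mathcomp Require Import all_boot all_order.
Set Implicit Arguments. Unset Strict Implicit. Unset Printing Implicit Defensive.
Import Order.TTheory.

Definition upset (T : Type) (le : T -> T -> Prop) (x : T -> Prop) : Prop :=
  forall a b, x a -> le a b -> x b.

Definition prod_le (J : Type) (d : J -> Order.disp_t)
    (B : forall j, porderType (d j)) (f g : forall j, B j) : Prop :=
  forall j, (f j <= g j)%O.

Definition pratt_comonoid (A : Type) (W : (A -> Prop) -> Prop) : Prop :=
  [/\ W (fun _ => False), W (fun _ => True) &
      forall C : A -> A -> Prop,
        (forall a, W (fun b => C a b) /\ W (fun b => C b a)) ->
        W (fun b => C b b)].

Definition fin_upsets (I : Type) (d : I -> Order.disp_t)
    (B : forall i, finPOrderType (d i)) (x : (forall i, B i) -> Prop) : Prop :=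
  upset (@prod_le I d (fun i => (B i : porderType (d i)))) x /\
  exists (n : nat) (idx : 'I_n -> I) (U : (forall k : 'I_n, B (idx k)) -> Prop),
    injective idx /\
    upset (@prod_le 'I_n (fun k => d (idx k)) (fun k => (B (idx k) : porderType (d (idx k))))) U /\
    forall a : forall i, B i, x a <-> U (fun k => a (idx k)).

(* Main.v *)
Require Import Defs.
From mathcomp Require Import all_boot all_order.
From mathcomp Require Import boolp classical_sets.
Import Order.TTheory.
From Stdlib Require List.
Set Implicit Arguments. Unset Strict Implicit. Unset Printing Implicit Defensive.
Local Open Scope classical_set_scope.

Definition agree (I : Type) (T : I -> Type) (F : list I) (a a' : forall i, T i) :=
  forall i, List.In i F -> a i = a' i.

Definition cyl (I : Type) (T : I -> Type) (l : list {i : I & T i}) (a : forall i, T i) :=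
  forall s, List.In s l -> a (projT1 s) = projT2 s.

Definition FD (I : Type) (T : I -> Type) (D : (forall i, T i) -> Prop) l :=
  exists F : list I, forall a a', cyl l a -> cyl l a' -> agree F a a' -> (D a <-> D a').

Lemma in_enumP (T : finType) (v : T) : List.In v (enum T).
Proof.
have : v \in enum T by rewrite mem_enum.
elim: (enum T) => [|x s IH] //=; rewrite in_cons => /orP[/eqP ->|/IH]; by [left|right].
Qed.

Lemma compactness (I : Type) (T : I -> finType) (D : (forall i, T i) -> Prop) :
  (forall x, exists G, forall a, agree G a x -> (D a <-> D x)) -> FD D nil.
Proof.
move=> Hloc; apply: contrapT => H0.
pose P := fun X : set {i : I & T i} => forall l, (forall s, List.In s l -> X s) -> ~ FD D l.
have [A [PA Amax]] : exists A, P A /\ forall B, A `<` B -> ~ P B.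
  apply: Zorn_bigcup => F FP Ftot l Hl.
  have : l = nil \/ exists X, F X /\ forall s, List.In s l -> X s.
    elim: l Hl => [|s l IH] Hl; first by left.
    right.
    have [Y FY Ys] : (\bigcup_(X in F) X) s by apply: Hl; left.
    have [->|[X [FX HX]]] := IH (fun t ht => Hl t (or_intror ht)).
      by exists Y; split => // t [<-|].
    have [XY|YX] := Ftot _ _ FX FY.
      by exists Y; split => // t [<-|/HX/XY].
    by exists X; split => // t [<-|/HX]; [exact: YX|].
  by case=> [->|[X [FX HX]]]; [exact: H0| exact: FP _ FX l HX].
have Atot : forall i, exists v, A (existT _ i v).
  move=> i; apply: contrapT => Hn.
  have Hv : forall v : T i, exists lF : list {i : I & T i} * list I,
      (forall s, List.In s lF.1 -> A s \/ s = existT _ i v) /\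
      (forall a a', cyl lF.1 a -> cyl lF.1 a' -> agree lF.2 a a' -> (D a <-> D a')).
    move=> v.
    have : ~ P (A `|` [set existT _ i v]).
      apply: Amax; split; first by move=> s As; left.
      move=> /(_ (existT _ i v)) H; apply: Hn; exists v; apply: H; by right.
    move=> /existsNP [l /not_implyP [Hl /contrapT [F HF]]].
    exists (l, F); split => //= s /Hl [|->]; by [left|right].
  have [g Hg] := choice Hv.
  pose l' := List.flat_map (fun v => List.filter (fun s => `[< A s >]) (g v).1) (enum (T i)).
  pose F' := i :: List.flat_map (fun v => (g v).2) (enum (T i)).
  apply: (PA l').
    move=> s /List.in_flat_map [v [_ /List.filter_In [_ /asboolP]]] //.
  exists F' => a a' ca ca' ag.
  have ei : a i = a' i by apply: ag; left.
  have [Hg1 Hg2] := Hg (a i).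
  have cyl_g : forall b, cyl l' b -> b i = a i -> cyl (g (a i)).1 b.
    move=> b cb bi s sin; have [As|->] := Hg1 s sin; last by [].
    apply: cb; apply/List.in_flat_map; exists (a i); split; first exact: in_enumP.
    by apply/List.filter_In; split => //; apply/asboolP.
  apply: Hg2; [exact: cyl_g|exact: cyl_g|].
  move=> j hj; apply: ag; right; apply/List.in_flat_map; exists (a i); split => //.
  exact: in_enumP.
pose x := fun i => projT1 (cid (Atot i)).
have Ax : forall i, A (existT _ i (x i)) := fun i => projT2 (cid (Atot i)).
have [G HG] := Hloc x.
apply: (PA (List.map (fun i => existT _ i (x i)) G)).
  by move=> s /List.in_map_iff [i [<- _]].
exists nil => a a' ca ca' _.
have agx : forall b, cyl (List.map (fun i => existT _ i (x i)) G) b -> agree G b x.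
  move=> b cb i hi; apply: (cb (existT _ i (x i))).
  by apply/List.in_map_iff; exists i.
rewrite (HG a (agx a ca)) (HG a' (agx a' ca')); done.
Qed.

Lemma fin_det (I : Type) (d : I -> Order.disp_t) (B : forall i, finPOrderType (d i))
  (X : (forall i, B i) -> Prop) :
  fin_upsets X -> exists F : list I, forall a a', agree F a a' -> (X a <-> X a').
Proof.
move=> [_ [n [idx [U [_ [_ HU]]]]]].
exists (List.map idx (enum 'I_n)) => a a' ag.
rewrite HU HU.
have -> : (fun k => a (idx k)) = (fun k => a' (idx k)); last by [].
apply: functional_extensionality_dep => k; apply: ag.
by apply: List.in_map; exact: in_enumP.
Qed.

Lemma nodup_of (I : Type) (F : list I) :
  exists l, List.NoDup l /\ forall i, List.In i l <-> List.In i F.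
Proof.
elim: F => [|x F [l [nd Hl]]]; first by exists nil; split => //; constructor.
have [xl|xl] := pselect (List.In x l).
  exists l; split => // i; split; first by move/Hl; right.
  by case=> [<-|/Hl].
exists (x :: l); split; first by constructor.
by move=> i /=; rewrite Hl.
Qed.

Lemma nth_In (I : Type) (x0 : I) (l : list I) k : (k < size l)%N -> List.In (nth x0 l k) l.
Proof. by elim: l k => [|x l IH] [|k] //= hk; [left|right; apply: IH]. Qed.

Lemma In_nth (I : Type) (x0 : I) (l : list I) i : List.In i l ->
  exists k, (k < size l)%N /\ nth x0 l k = i.
Proof.
elim: l => [|x l IH] //= [<-|/IH [k [hk e]]]; first by exists 0%N.
by exists k.+1.
Qed.

Lemma nth_inj (I : Type) (x0 : I) (l : list I) j k : List.NoDup l ->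
  (j < size l)%N -> (k < size l)%N -> nth x0 l j = nth x0 l k -> j = k.
Proof.
elim: l j k => [|x l IH] [|j] [|k] //= nd hj hk; inversion nd; subst.
- by move=> e; case: H1; rewrite e; apply: nth_In.
- by move=> e; case: H1; rewrite -e; apply: nth_In.
- by move=> e; congr S; apply: IH.
Qed.

Lemma mk_fin (I : Type) (d : I -> Order.disp_t) (B : forall i, finPOrderType (d i))
  (D : (forall i, B i) -> Prop) (F : list I) :
  upset (@prod_le I d (fun i => (B i : porderType (d i)))) D ->
  (forall a a', agree F a a' -> (D a <-> D a')) -> fin_upsets D.
Proof.
move=> upD HF; split => //.
have [l [nd Hl]] := nodup_of F.
pose n := size l.
pose idx := fun k : 'I_n => tnth (in_tuple l) k.
have idxE : forall x0 (k : 'I_n), idx k = nth x0 l k.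
  by move=> x0 k; rewrite /idx (tnth_nth x0).
exists n, idx, (fun f => exists a, D a /\ forall k, (a (idx k) <= f k)%O).
split; [|split].
- move=> k1 k2; have x0 : I := idx k1; rewrite !(idxE x0) => e; apply: val_inj.
  exact: (nth_inj nd (ltn_ord k1) (ltn_ord k2) e).
- move=> f g [a [Da Ha]] fg; exists a; split => // k.
  exact: le_trans (Ha k) (fg k).
move=> a; split; first by move=> Da; exists a; split.
move=> [a' [Da' Ha']].
pose m := fun i => if pselect (List.In i l) then a' i else a i.
have Dm : D m.
  apply/(HF m a') => // i /Hl il; rewrite /m; case: pselect => //.
apply: upD Dm _ => i; rewrite /m; destruct (pselect (List.In i l)) as [il|nl] => /=; last exact: lexx.
have [k [hk e]] := In_nth i il.
have := Ha' (Ordinal hk); rewrite (idxE i) /= e; done.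
Qed.

Theorem theorem9p2 (I : Type) (d : I -> Order.disp_t)
    (B : forall i, finPOrderType (d i))
    (hbot : forall i, exists z : B i, forall a : B i, (z <= a)%O)
    (htop : forall i, exists t : B i, forall a : B i, (a <= t)%O) :
  @pratt_comonoid (forall i, B i) (@fin_upsets I d B).
Proof.
pose z := fun i => projT1 (cid (hbot i)).
have hz : forall i (a : B i), (z i <= a)%O := fun i => projT2 (cid (hbot i)).
pose t := fun i => projT1 (cid (htop i)).
have ht : forall i (a : B i), (a <= t i)%O := fun i => projT2 (cid (htop i)).
split.
- apply: (@mk_fin _ _ _ _ nil) => //.
- apply: (@mk_fin _ _ _ _ nil) => //.
move=> C hC.
pose D := fun b => C b b.
have upD : upset (@prod_le I d (fun i => (B i : porderType (d i)))) D.
  move=> b b' Db le; have [[u1 _] _] := hC b; have [_ [u2 _]] := hC b'.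
  exact: u2 _ _ (u1 _ _ Db le) le.
pose lo := fun (F : list I) (c : forall i, B i) i =>
  if pselect (List.In i F) then c i else z i.
pose hi := fun (F : list I) (c : forall i, B i) i =>
  if pselect (List.In i F) then c i else t i.
have loag : forall F c, agree F (lo F c) c.
  by move=> F c i hi'; rewrite /lo; case: pselect.
have hiag : forall F c, agree F (hi F c) c.
  by move=> F c i hi'; rewrite /hi; case: pselect.
have lole : forall (F G : list I) (c a : forall i, B i), agree (F ++ G) a c ->
    @prod_le I d (fun i => (B i : porderType (d i))) (lo F c) a.
  move=> F G c a ag i; rewrite /lo; case: pselect => h; last exact: hz.
  by rewrite ag //; apply: List.in_or_app; left.
have hile : forall (F G : list I) (c a : forall i, B i), agree (G ++ F) a c ->
    @prod_le I d (fun i => (B i : porderType (d i))) a (hi F c).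
  move=> F G c a ag i; rewrite /hi; case: pselect => h; last exact: ht.
  by rewrite ag //; apply: List.in_or_app; right.
have agsym : forall F (a c : forall i, B i), agree F a c -> agree F c a.
  by move=> F a c ag i h; rewrite ag.
suff [F HF] : FD D nil.
  apply: (mk_fin upD (F := F)) => a a' ag; apply: HF => //.
apply: (@compactness I (fun i => B i) D) => x.
have [[ur1 _] [uc1 _]] := hC x.
have [F1 HF1] := fin_det (proj1 (hC x)).
have [xD|xD] := pselect (D x).
- pose y := lo F1 x.
  have Cxy : C x y by apply/(HF1 y x (loag _ _)).
  have [_ Hc] := hC y; have uc := proj1 Hc.
  have [F2 HF2] := fin_det Hc.
  have Czy : C (lo F2 x) y by apply/(HF2 _ x (loag _ _)).
  exists (F1 ++ F2) => a ag; split => // _.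
  have [[ura _] _] := hC a.
  apply: ura (uc _ _ Czy (lole F2 F1 x a _)) _.
    by move=> i h; apply: ag; move: h; rewrite !List.in_app_iff; tauto.
  exact: lole F1 F2 x a ag.
- pose y := hi F1 x.
  have Cxy : ~ C x y by move/(HF1 x y (agsym _ _ _ (hiag _ _))).
  have [_ Hc] := hC y; have uc := proj1 Hc.
  have [F2 HF2] := fin_det Hc.
  have Czy : ~ C (hi F2 x) y by move/(HF2 _ x (hiag _ _)).
  exists (F1 ++ F2) => a ag; split; last by move/xD.
  move=> Da; exfalso.
  have [_ [uca _]] := hC a.
  have Cza : C (hi F2 x) a.
    apply: uca Da _; apply: (hile F2 F1 x a).
    by move=> i h; apply: ag; move: h; rewrite !List.in_app_iff; tauto.
  have [[urz _] _] := hC (hi F2 x).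
  apply: Czy; apply: urz Cza _; apply: (hile F1 F2 x a).
  by move=> i h; apply: ag; move: h; rewrite !List.in_app_iff; tauto.
Qed.
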